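(* Let $n\ge 4$. For every cycle $C$ of length 8 in $Q_n$ there is an automorphism of $Q_n$ mapping $C$ onto exactly one of the following seven cycles, which are pairwise non-isomorphic (no automorphism of $Q_n$ maps one onto another): $C_8^1=(0,1,3,2,6,7,5,4)$, $C_8^2=(0,1,3,2,6,14,12,8)$, $C_8^3=(0,1,3,2,6,14,12,4)$, $C_8^4=(0,1,3,2,6,4,12,8)$, $C_8^5=(0,1,3,7,15,14,12,8)$, $C_8^6=(0,1,3,7,15,14,12,4)$, $C_8^7=(0,1,3,7,6,14,10,8)$. Moreover, the number of edges of $Q_n$ joining the parity-0 vertices of the cycle to vertices outside the cycle is $4n-12$ for $C_8^1$, $4n-9$ for $C_8^2$, $4n-10$ for $C_8^3$ and for $C_8^4$, and $4n-8$ for each of $C_8^5$, $C_8^6$, $C_8^7$.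
   Context: $Q_n$ is the $n$-dimensional hypercube whose vertices are the binary strings of length $n$, identified with the integers $0,\dots,2^n-1$ via binary expansion; two vertices are adjacent iff their labels differ in exactly one bit. The parity of a vertex is the number of ones in its label modulo 2. Cycles are written as sequences of vertices. The automorphisms of $Q_n$ are the maps $x\mapsto g_\pi(x\oplus v)$, where $\oplus$ is bitwise XOR with a fixed vertex $v$ and $g_\pi$ permutes the coordinate positions by a permutation $\pi$ of $\{0,\dots,n-1\}$. *)

(* Defs.v *)
From mathcomp Require Import all_boot all_fingroup.
Set Implicit Arguments. Unset Strict Implicit. Unset Printing Implicit Defensive.

Definition vtx (n : nat) := {ffun 'I_n -> bool}.

(* The vertex with integer label k (bit i of k is coordinate i). *)
Definition label (n k : nat) : vtx n := [ffun i : 'I_n => odd (k %/ 2 ^ i)].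

Definition adj (n : nat) (x y : vtx n) : bool := #|[set i | x i != y i]| == 1.

Definition parity (n : nat) (x : vtx n) : bool := odd #|[set i | x i]|.

(* automorphism x |-> g_pi (x xor v), where (g_pi y)_(pi i) = y_i *)
Definition qaut (n : nat) (p : 'S_n) (v : vtx n) (x : vtx n) : vtx n :=
  [ffun j : 'I_n => x (p^-1 j) (+) v (p^-1 j)]%g.

Definition is_qcycle (n : nat) (c : seq (vtx n)) : bool :=
  [&& 3 <= size c, uniq c & path.cycle (@adj n) c].

Definition same_cycle (n : nat) (c d : seq (vtx n)) : Prop :=
  exists k, c = rot k d \/ c = rot k (rev d).

Definition aut_maps_onto (n : nat) (c d : seq (vtx n)) : Prop :=
  exists (p : 'S_n) (v : vtx n), same_cycle (map (qaut p v) c) d.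

(* the seven cycles C_8^1 .. C_8^7 (indexed 0..6) *)
Definition C8_labels : seq (seq nat) :=
  [:: [:: 0; 1; 3; 2; 6; 7; 5; 4];
      [:: 0; 1; 3; 2; 6; 14; 12; 8];
      [:: 0; 1; 3; 2; 6; 14; 12; 4];
      [:: 0; 1; 3; 2; 6; 4; 12; 8];
      [:: 0; 1; 3; 7; 15; 14; 12; 8];
      [:: 0; 1; 3; 7; 15; 14; 12; 4];
      [:: 0; 1; 3; 7; 6; 14; 10; 8]].

Definition C8 (n : nat) (i : 'I_7) : seq (vtx n) := map (label n) (nth [::] C8_labels i).

Definition even_out_edges (n : nat) (c : seq (vtx n)) : nat :=
  #|[set xy : vtx n * vtx n | [&& xy.1 \in c, ~~ parity xy.1, xy.2 \notin c & adj xy.1 xy.2]]|.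

Definition C8_count (n : nat) (i : 'I_7) : nat :=
  nth 0 [:: 4 * n - 12; 4 * n - 9; 4 * n - 10; 4 * n - 10; 4 * n - 8; 4 * n - 8; 4 * n - 8] i.

(* Main.v *)
Require Import Defs.
From mathcomp Require Import all_boot all_fingroup.
From mathcomp Require Import zify.
Set Implicit Arguments. Unset Strict Implicit. Unset Printing Implicit Defensive.

Definition bit (a j : nat) := odd (a %/ 2 ^ j).
Definition bitdiff a b := find (fun j => bit a j != bit b j) (iota 0 4).
Definition nxt k := k.+1 %% 8.
Definition dword (M : seq nat) := [seq bitdiff (nth 0 M k) (nth 0 M (nxt k)) | k <- iota 0 8].
Definition stepok a b j := all (fun i => bit b i == bit a i (+) (i == j)) (iota 0 4).
Definition Mok M := [&& size M == 8, all (fun a => a < 16) M & all (fun k => (nth 0 (dword M) k < 4) && stepok (nth 0 M k) (nth 0 M (nxt k)) (nth 0 (dword M) k)) (iota 0 8)].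
Definition patok (r T : seq nat) := all (fun a => all (fun b => (nth 0 r a == nth 0 r b) == (nth 0 T a == nth 0 T b)) (iota 0 8)) (iota 0 8).
Definition dihedrals := flatten [seq [seq rot k L | k <- iota 0 8] ++ [seq rot k (rev L) | k <- iota 0 8] | L <- C8_labels].
Definition segs := [seq (a, b) | a <- iota 0 8, b <- [seq b <- iota 0 8 | a < b]].
Definition validw {T:eqType} (w : seq T) := all (fun l => ~~ odd (count (pred1 l) w)) w && all (fun ab => has (fun l => odd (count (pred1 l) (drop ab.1 (take ab.2 w)))) w) segs.
Definition fixok (r : seq nat) := all (fun k => nth 0 r (nth 0 r k) == nth 0 r k) (iota 0 8).
Fixpoint prodlist (bs : seq nat) : seq (seq nat) := if bs is b :: bs' then [seq x :: s | x <- iota 0 b.+1, s <- prodlist bs'] else [:: [::]].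
Definition bigcheck := let D := [seq dword M | M <- dihedrals] in all (fun r => if fixok r then (if validw r then has (patok r) D else true) else true) (prodlist (iota 0 8)).
Lemma bigcheckP : bigcheck = true. Proof. vm_compute. reflexivity. Qed.
Lemma dihedrals_ok : all Mok dihedrals = true. Proof. vm_compute. reflexivity. Qed.

Definition flip n (x : vtx n) (j : 'I_n) : vtx n := [ffun i => x i (+) (i == j)].

Lemma adjP n (x y : vtx n) : reflect (exists j, y = flip x j) (adj x y).
Proof.
apply: (iffP cards1P) => [[j Hj]|[j ->]].
  exists j; apply/ffunP => i; rewrite ffunE.
  move/setP: Hj => /(_ i); rewrite !inE => <-.
  by case: (x i); case: (y i).
exists j; apply/setP => i; rewrite !inE ffunE.
by case: (x i); case: (i == j).
Qed.

Lemma foldl_flip n (x : vtx n) s :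
  foldl (@flip n) x s = [ffun j => x j (+) odd (count (pred1 j) s)].
Proof.
elim: s x => [|y s IH] x /=.
  by apply/ffunP => j; rewrite !ffunE addbF.
rewrite IH; apply/ffunP => j; rewrite !ffunE oddD oddb addbA eq_sym.
by [].
Qed.

Lemma qaut_flip n (p : 'S_n) v x j :
  qaut p v (flip x j) = flip (qaut p v x) (p j).
Proof.
apply/ffunP => i; rewrite !ffunE.
have -> : (p^-1 i == j)%g = (i == p j) by rewrite -(inj_eq (@perm_inj _ p)) permKV.
by rewrite addbAC.
Qed.

Lemma qaut_foldl n (p : 'S_n) v x s :
  qaut p v (foldl (@flip n) x s) = foldl (@flip n) (qaut p v x) (map p s).
Proof. by elim: s x => [|y s IH] x //=; rewrite IH qaut_flip. Qed.

Lemma bit_hi a j : a < 16 -> 4 <= j -> bit a j = false.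
Proof.
move=> Ha Hj; rewrite /bit divn_small //.
apply: (leq_trans Ha); exact: (@leq_pexp2l 2 4 j).
Qed.

Lemma card_bits n (P : nat -> bool) : 4 <= n -> (forall j, 4 <= j -> P j = false) ->
  #|[set i : 'I_n | P i]| = count P (iota 0 4).
Proof.
move=> Hn HP.
have -> : #|[set i : 'I_n | P i]| = count P (iota 0 n).
  rewrite cardsE cardE /enum_mem size_filter -enumT -val_enum_ord count_map.
  by apply: eq_count => i.
rewrite -(subnKC Hn) iotaD count_cat add0n. idtac.
rewrite [X in _ + X](@eq_in_count _ _ pred0); first by rewrite count_pred0 addn0.
move=> j; rewrite mem_iota => /andP [Hj _]; exact: HP.
Qed.

Definition ham n (x y : vtx n) := #|[set i | x i != y i]|.
Definition ham4 a b := count (fun j => bit a j != bit b j) (iota 0 4).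
Definition par4 a := odd (count (bit a) (iota 0 4)).

Lemma ham_label n a b : 4 <= n -> a < 16 -> b < 16 ->
  ham (label n a) (label n b) = ham4 a b.
Proof.
move=> Hn Ha Hb.
have HP : forall j, 4 <= j -> (bit a j != bit b j) = false by move=> j Hj; rewrite !bit_hi.
rewrite /ham /ham4 -(card_bits Hn HP).
by apply: eq_card => i; rewrite !inE !ffunE.
Qed.

Lemma parity_label n a : 4 <= n -> a < 16 -> parity (label n a) = par4 a.
Proof.
move=> Hn Ha.
have HP : forall j, 4 <= j -> bit a j = false by move=> j Hj; rewrite bit_hi.
rewrite /parity /par4 -(card_bits Hn HP).
by congr odd; apply: eq_card => i; rewrite !inE !ffunE.
Qed.

Lemma ham4_table : all (fun a => all (fun b => (ham4 a b == 0) ==> (a == b)) (iota 0 16)) (iota 0 16) = true.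
Proof. vm_compute. reflexivity. Qed.

Lemma label_inj n a b : 4 <= n -> a < 16 -> b < 16 -> label n a = label n b -> a = b.
Proof.
move=> Hn Ha Hb E.
have H0 : ham4 a b = 0.
  rewrite -(ham_label Hn Ha Hb) E /ham; apply/eqP; rewrite cards_eq0; apply/eqP/setP => i.
  by rewrite !inE eqxx.
move/allP: ham4_table => /(_ a); rewrite mem_iota Ha => /(_ isT) /allP /(_ b).
by rewrite mem_iota Hb H0 => /(_ isT) /eqP.
Qed.

Lemma label_flip n a b j : 4 <= n.+1 -> a < 16 -> b < 16 -> j < 4 -> stepok a b j ->
  label n.+1 b = flip (label n.+1 a) (inord j).
Proof.
move=> Hn Ha Hb Hj /allP Hs; apply/ffunP => i; rewrite !ffunE.
have -> : (i == inord j) = (val i == j) by rewrite -val_eqE /= inordK //; exact: leq_trans Hj Hn.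
case: (ltnP i 4) => Hi.
  by apply/eqP; apply: Hs; rewrite mem_iota.
rewrite -/(bit b i) -/(bit a i) !bit_hi //.
by case: eqP => // Eij; move: Hi; rewrite Eij leqNgt Hj.
Qed.

Lemma walkM n M : 4 <= n.+1 -> Mok M -> forall k, k < 8 ->
  label n.+1 (nth 0 M k) = foldl (@flip _) (label n.+1 (nth 0 M 0)) (take k (map inord (dword M))).
Proof.
move=> Hn /and3P [/eqP HsM /allP Hlt /allP Hst].
elim=> [|k IH] Hk; first by rewrite take0.
have Hsz : size (map (@inord n) (dword M)) = 8 by rewrite !size_map size_iota.
rewrite (take_nth ord0); last by rewrite Hsz (ltn_trans _ Hk).
rewrite foldl_rcons -IH; last exact: ltn_trans Hk.
rewrite (nth_map 0); last by rewrite size_map size_iota (ltn_trans _ Hk).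
have Hki : k \in iota 0 8 by rewrite mem_iota (ltn_trans _ Hk).
have /andP [Hd Hs] := Hst k Hki.
have Hnx : nxt k = k.+1 by rewrite /nxt modn_small.
rewrite Hnx in Hs.
apply: label_flip => //; apply: Hlt; apply: mem_nth; rewrite HsM //.
exact: ltn_trans Hk.
Qed.

Lemma exists_perm (T : finType) (x0 : T) (xs ys : seq T) : size xs = size ys ->
  (forall a b, a < size xs -> b < size xs ->
     (nth x0 xs a == nth x0 xs b) = (nth x0 ys a == nth x0 ys b)) ->
  exists p : {perm T}, map p xs = ys.
Proof.
elim: xs ys => [|x xs IH] [|y ys] //=.
  by move=> _ _; exists 1%g.
move=> [Hsz] H.
have [q Hq] : exists q : {perm T}, map q xs = ys.
  by apply: IH => // a b Ha Hb; exact: (H a.+1 b.+1).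
case: (boolP (x \in xs)) => Hx.
  exists q; rewrite Hq; congr cons.
  have Hi : index x xs < size xs by rewrite index_mem.
  have := H 0 (index x xs).+1 isT Hi; rewrite /= nth_index // eqxx => /esym/eqP ->.
  by rewrite -Hq (nth_map x0) // nth_index.
have Hy : y \notin ys.
  apply/negP => Hy.
  have Hi : index y ys < size xs by rewrite Hsz index_mem.
  have := H 0 (index y ys).+1 isT Hi; rewrite /= nth_index // eqxx => /eqP Ex.
  by move: Hx; rewrite Ex mem_nth.
exists (q * tperm (q x) y)%g; rewrite permM tpermL; congr cons.
rewrite -Hq; apply/eq_in_map => z Hz; rewrite permM tpermD //.
  by rewrite (inj_eq (@perm_inj _ q)); apply: contraNneq Hx => ->.
by apply: contraNneq Hy => ->; rewrite -Hq map_f.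
Qed.

Lemma validw_map (T U : eqType) (f : T -> U) s : {in s &, injective f} ->
  validw (map f s) = validw s.
Proof.
move=> Hf; rewrite /validw; congr andb.
  rewrite all_map; apply: eq_in_all => l Hl /=; rewrite count_map.
  congr (~~ odd _); apply: eq_in_count => y Hy /=.
  exact: (inj_in_eq Hf).
apply: eq_all => ab; rewrite has_map; apply: eq_in_has => l Hl /=.
rewrite -map_take -map_drop count_map; congr odd; apply: eq_in_count => y Hy /=.
apply: (inj_in_eq Hf) => //; exact: mem_take (mem_drop Hy).
Qed.

Lemma prodlistP bs s : size s = size bs ->
  (forall k, k < size s -> nth 0 s k <= nth 0 bs k) -> s \in prodlist bs.
Proof.
elim: bs s => [|b bs IH] [|x s] // [Hsz] H.
apply/allpairsP; exists (x, s); split => //.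
  by rewrite mem_iota ltnS (H 0).
by apply: IH => // k Hk; exact: (H k.+1).
Qed.

Definition Dwords := [seq dword M | M <- dihedrals].
Lemma bigcheck_eq : bigcheck = all (fun r => if fixok r then (if validw r then has (patok r) Dwords else true) else true) (prodlist (iota 0 8)).
Proof. reflexivity. Qed.

Lemma segs_ok : all (fun ab => (ab.1 < ab.2) && (ab.2 < 8)) segs = true.
Proof. vm_compute. reflexivity. Qed.

Lemma index_eq (T : eqType) (w : seq T) x y : x \in w -> y \in w ->
  (index x w == index y w) = (x == y).
Proof.
move=> Hx Hy; apply/eqP/eqP => [E|-> //].
by rewrite -(nth_index x Hx) -(nth_index x Hy) E.
Qed.

Lemma classify m (hn : 4 <= m.+1) (x0 : vtx m.+1) (w : seq 'I_m.+1) :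
  size w = 8 -> foldl (@flip _) x0 w = x0 ->
  uniq [seq foldl (@flip _) x0 (take k w) | k <- iota 0 8] ->
  exists i : 'I_7, aut_maps_onto [seq foldl (@flip _) x0 (take k w) | k <- iota 0 8] (C8 m.+1 i).
Proof.
move=> Hsw Hcl Hu.
set F := fun k => foldl (@flip _) x0 (take k w).
have Hvw : validw w.
  rewrite /validw; apply/andP; split.
    apply/allP => l _; move: Hcl; rewrite foldl_flip => /ffunP/(_ l); rewrite ffunE.
    by case: (x0 l); case: (odd _).
  apply/allP => [[a b]] Hab /=.
  have /andP [Hab' Hb8] : (a < b) && (b < 8) by move/allP: segs_ok => /(_ _ Hab).
  have Ha8 : a < 8 by exact: ltn_trans Hb8.
  have Hne : F a != F b.
    have Hsz : size [seq F k | k <- iota 0 8] = 8 by rewrite size_map size_iota.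
    have := nth_uniq x0 (_ : a < _) (_ : b < _) Hu.
    rewrite Hsz => /(_ Ha8 Hb8); rewrite !(nth_map 0) ?size_iota // !nth_iota // => ->.
    by rewrite ltn_eqF.
  have [l Hl] : exists l, F a l != F b l.
    case: (boolP [exists l, F a l != F b l]) => [/existsP //|/existsPn H].
    by case/eqP: Hne; apply/ffunP => l; move: (H l); rewrite negbK => /eqP.
  rewrite /F !foldl_flip !ffunE in Hl.
  have Et : take b w = take a w ++ drop a (take b w).
    by rewrite -{1}(cat_take_drop a (take b w)) take_takel // ltnW.
  have Ho : odd (count (pred1 l) (drop a (take b w))).
    have Hc : count (pred1 l) (take b w) = count (pred1 l) (take a w) + count (pred1 l) (drop a (take b w)).
      by rewrite {1}Et count_cat.
    by move: Hl; rewrite Hc oddD; case: (x0 l); case: (odd _); case: (odd _).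
  apply/hasP; exists l => //.
  have : l \in drop a (take b w).
    by rewrite -has_pred1 has_count; move: Ho; case: count.
  by move/mem_drop/mem_take.
pose r := map (index^~ w) w.
have Hsr : size r = 8 by rewrite size_map.
have Hw : map (nth ord0 w) r = w.
  by rewrite -map_comp; apply: map_id_in => x Hx /=; exact: nth_index.
have Hinj : {in r &, injective (nth ord0 w)}.
  by move=> a b /mapP [x Hx ->] /mapP [y Hy ->] /=; rewrite !nth_index // => ->.
have Hvr : validw r by rewrite -(validw_map Hinj) Hw.
have Hrk : forall k, k < 8 -> nth 0 r k = index (nth ord0 w k) w.
  by move=> k Hk; rewrite (nth_map ord0) ?Hsw.
have Hfix : fixok r.
  apply/allP => k; rewrite mem_iota => /andP [_ Hk].
  have Hwk : nth ord0 w k \in w by apply: mem_nth; rewrite Hsw.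
  have Hi : index (nth ord0 w k) w < 8 by rewrite -Hsw index_mem.
  by rewrite Hrk // Hrk // nth_index.
have Hmem : r \in prodlist (iota 0 8).
  apply: prodlistP; first by rewrite Hsr size_iota.
  move=> k Hk; rewrite Hsr in Hk; rewrite nth_iota // Hrk //.
  by apply: index_nth; rewrite Hsw.
move: bigcheckP; rewrite bigcheck_eq => /allP /(_ r Hmem); rewrite Hfix Hvr.
move=> /hasP [T /mapP [M HM ->] HT].
have HMok : Mok M by move/allP: dihedrals_ok => /(_ M HM).
have HMok' := HMok; move/and3P: HMok' => [/eqP HM8 _ /allP Hst].
set Tw := map (@inord m) (dword M).
have HsT : size Tw = 8 by rewrite !size_map size_iota.
have [p Hp] : exists p : 'S_m.+1, map p w = Tw.
  apply: (@exists_perm _ ord0); first by rewrite Hsw HsT.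
  move=> a b Ha Hb; rewrite Hsw in Ha Hb.
  have Hwa : nth ord0 w a \in w by apply: mem_nth; rewrite Hsw.
  have Hwb : nth ord0 w b \in w by apply: mem_nth; rewrite Hsw.
  rewrite -(index_eq Hwa Hwb) -!Hrk //.
  move/allP: HT => /(_ a); rewrite mem_iota Ha => /(_ isT) /allP /(_ b).
  rewrite mem_iota Hb => /(_ isT) /eqP ->.
  have Hta : nth 0 (dword M) a < 4.
    have Hai : a \in iota 0 8 by rewrite mem_iota Ha.
    by case/andP: (Hst a Hai).
  have Htb : nth 0 (dword M) b < 4.
    have Hbi : b \in iota 0 8 by rewrite mem_iota Hb.
    by case/andP: (Hst b Hbi).
  have Hta' : nth 0 (dword M) a < m.+1 by exact: leq_trans Hta hn.
  have Htb' : nth 0 (dword M) b < m.+1 by exact: leq_trans Htb hn.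
  have E : forall k, k < 8 -> nth ord0 Tw k = inord (nth 0 (dword M) k).
    by move=> k Hk; rewrite /Tw (nth_map 0) // size_map size_iota.
  by rewrite !E // -val_eqE /= !inordK.
pose v : vtx m.+1 := [ffun i => x0 i (+) label m.+1 (nth 0 M 0) (p i)].
have Hv0 : qaut p v x0 = label m.+1 (nth 0 M 0).
  by apply/ffunP => j; rewrite !ffunE permKV addbA addbb.
have Himg : map (qaut p v) [seq F k | k <- iota 0 8] = map (label m.+1) M.
  rewrite -map_comp; transitivity [seq label m.+1 (nth 0 M k) | k <- iota 0 8].
    apply/eq_in_map => k; rewrite mem_iota => /andP [_ Hk] /=.
    by rewrite /F qaut_foldl Hv0 map_take Hp (walkM hn HMok Hk).
  by rewrite -{2}(mkseq_nth 0 M) HM8 /mkseq -map_comp.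
move/flattenP: HM => [X /mapP [L HL ->] HX].
have Hi : index L C8_labels < 7 by rewrite index_mem.
exists (Ordinal Hi), p, v.
have EL : nth [::] C8_labels (Ordinal Hi) = L by rewrite /= nth_index.
rewrite /same_cycle /C8 EL Himg.
rewrite mem_cat in HX; case/orP: HX => /mapP [k _ ->]; exists k.
  by left; rewrite map_rot.
by right; rewrite map_rot map_rev.
Qed.

Lemma classify_cycle m (hn : 4 <= m.+1) (c : seq (vtx m.+1)) : is_qcycle c -> size c = 8 ->
  exists i : 'I_7, aut_maps_onto c (C8 m.+1 i).
Proof.
case: c => [|c0 [|c1 [|c2 [|c3 [|c4 [|c5 [|c6 [|c7 [|? ?]]]]]]]]] // /and3P [_ Hu Hcy] _.
move: Hcy => /=.
case/andP => /adjP [j0 E1]; case/andP => /adjP [j1 E2]; case/andP => /adjP [j2 E3].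
case/andP => /adjP [j3 E4]; case/andP => /adjP [j4 E5]; case/andP => /adjP [j5 E6].
case/andP => /adjP [j6 E7]; case/andP => /adjP [j7 Ecl] _.
subst c1 c2 c3 c4 c5 c6 c7.
set w := [:: j0; j1; j2; j3; j4; j5; j6; j7].
have Ew : forall x : vtx m.+1, [:: x; flip x j0; flip (flip x j0) j1; flip (flip (flip x j0) j1) j2;
   flip (flip (flip (flip x j0) j1) j2) j3;
   flip (flip (flip (flip (flip x j0) j1) j2) j3) j4;
   flip (flip (flip (flip (flip (flip x j0) j1) j2) j3) j4) j5;
   flip (flip (flip (flip (flip (flip (flip x j0) j1) j2) j3) j4) j5) j6]
   = [seq foldl (@flip _) x (take k w) | k <- iota 0 8] by move=> x; reflexivity.
rewrite Ew in Hu *; apply: classify => //.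
Qed.

Definition inv n (c : seq (vtx n)) :=
  [seq sumn [seq count (fun y => ham x y == d) c | x <- c] | d <- iota 0 5].
Definition invnat (L : seq nat) :=
  [seq sumn [seq count (fun b => ham4 a b == d) L | a <- L] | d <- iota 0 5].

Lemma inv_perm n (c c' : seq (vtx n)) : perm_eq c c' -> inv c = inv c'.
Proof.
move=> H; apply/eq_map => d.
have -> : [seq count (fun y => ham x y == d) c | x <- c] = [seq count (fun y => ham x y == d) c' | x <- c].
  by apply/eq_map => x; move/seq.permP: H; apply.
by apply: perm_sumn; apply: perm_map.
Qed.

Lemma ham_qaut n (p : 'S_n) v x y : ham (qaut p v x) (qaut p v y) = ham x y.
Proof.
rewrite /ham -[RHS](card_preimset _ (@perm_inj _ (p^-1)%g)).
by apply: eq_card => j; rewrite !inE !ffunE; case: (x _); case: (y _); case: (v _).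
Qed.

Lemma inv_qaut n (p : 'S_n) v c : inv (map (qaut p v) c) = inv c.
Proof.
apply/eq_map => d; rewrite -map_comp; congr sumn; apply/eq_map => x /=.
by rewrite count_map; apply: eq_count => y /=; rewrite ham_qaut.
Qed.

Lemma inv_aut n (c d : seq (vtx n)) : aut_maps_onto c d -> inv c = inv d.
Proof.
case=> p [v [k [E|E]]]; rewrite -(inv_qaut p v) E; apply: inv_perm.
  by rewrite perm_rot perm_refl.
by rewrite perm_rot perm_rev perm_refl.
Qed.

Lemma C8_small : all (fun L => all (fun a => a < 16) L) C8_labels = true.
Proof. by []. Qed.

Lemma C8_small_i (i : 'I_7) a : a \in nth [::] C8_labels i -> a < 16.
Proof.
move: C8_small => /allP /(_ (nth [::] C8_labels i)).
by rewrite mem_nth // => /(_ isT) /allP; apply.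
Qed.

Lemma inv_C8 n (i : 'I_7) : 4 <= n -> inv (C8 n i) = invnat (nth [::] C8_labels i).
Proof.
move=> Hn; apply/eq_map => d; rewrite /C8 -map_comp; congr sumn.
apply/eq_in_map => a Ha /=; rewrite count_map; apply: eq_in_count => b Hb /=.
by rewrite (ham_label Hn (C8_small_i Ha) (C8_small_i Hb)).
Qed.

Lemma invnat_table : all (fun i => all (fun j =>
  (invnat (nth [::] C8_labels i) == invnat (nth [::] C8_labels j)) ==> (i == j)) (iota 0 7)) (iota 0 7) = true.
Proof. vm_compute. reflexivity. Qed.

Lemma inv_C8_inj n (i j : 'I_7) : 4 <= n -> inv (C8 n i) = inv (C8 n j) -> i = j.
Proof.
move=> Hn; rewrite !inv_C8 // => E; apply: val_inj.
move/allP: invnat_table => /(_ i); rewrite mem_iota ltn_ord => /(_ isT) /allP /(_ j).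
by rewrite mem_iota ltn_ord E eqxx => /(_ isT) /eqP.
Qed.

Lemma C8_tab : all (fun L => [&& size L == 8, uniq L & path.cycle (fun a b => ham4 a b == 1) L]) C8_labels = true.
Proof. vm_compute. reflexivity. Qed.

Lemma C8_qcycle n (i : 'I_7) : 4 <= n -> is_qcycle (C8 n i).
Proof.
move=> Hn.
have Hin : nth [::] C8_labels i \in C8_labels by apply: mem_nth.
move/allP: C8_tab => /(_ _ Hin) /and3P [/eqP Hs Hu Hc].
rewrite /is_qcycle /C8 size_map Hs /=; apply/andP; split.
  rewrite map_inj_in_uniq // => a b Ha Hb.
  exact: label_inj Hn (C8_small_i Ha) (C8_small_i Hb).
rewrite cycle_map.
rewrite (@eq_in_cycle _ (fun a => a < 16) _ (fun a b => ham4 a b == 1)) //.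
  move=> a b Ha Hb /=.
  by rewrite -[adj _ _]/(ham _ _ == 1) ham_label.
by apply/allP => a Ha; exact: C8_small_i Ha.
Qed.

Lemma nbr_card n (x : vtx n) c : uniq c ->
  #|[set y | (y \notin c) && adj x y]| = n - count (adj x) c.
Proof.
move=> Hu.
have Hall : #|[set y | adj x y]| = n.
  have -> : [set y | adj x y] = [set flip x j | j : 'I_n].
    apply/setP => y; rewrite inE; apply/adjP/imsetP => [[j ->]|[j _ ->]]; by exists j.
  rewrite card_imset ?card_ord // => j k /ffunP /(_ j); rewrite !ffunE eqxx.
  by case: (x j); case: eqP => //= _; case: eqP.
have Hin : #|[set y | (y \in c) && adj x y]| = count (adj x) c.
  rewrite -size_filter; move/card_uniqP: (filter_uniq (adj x) Hu) => <-.
  by apply: eq_card => y; rewrite inE mem_filter andbC.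
have E1 : [set y | adj x y] :&: [set y | y \in c] = [set y | (y \in c) && adj x y].
  by apply/setP => y; rewrite !inE andbC.
have E2 : [set y | adj x y] :\: [set y | y \in c] = [set y | (y \notin c) && adj x y].
  by apply/setP => y; rewrite !inE.
move: Hall; rewrite -(cardsID [set y | y \in c]) E1 E2 Hin; lia.
Qed.

Lemma eoe_sum n (c : seq (vtx n)) : uniq c ->
  even_out_edges c = sumn [seq (if ~~ parity x then n - count (adj x) c else 0) | x <- c].
Proof.
move=> Hu; rewrite /even_out_edges -sum1_card.
rewrite (eq_bigl (fun xy => ((xy.1 \in c) && ~~ parity xy.1) && ((xy.2 \notin c) && adj xy.1 xy.2))); last first.
  by move=> [x y]; rewrite inE /= !andbA.
rewrite -(pair_big_dep (fun x => (x \in c) && ~~ parity x) (fun x y => (y \notin c) && adj x y) (fun _ _ => 1)) /=.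
rewrite sumnE big_map (big_uniq _ Hu) -big_mkcondr /=.
apply: eq_bigr => x _; rewrite sum1dep_card; exact: nbr_card.
Qed.

Lemma sumn_add n (P : pred nat) (k : nat -> nat) L : all (fun a => k a <= n) L ->
  sumn [seq (if P a then n - k a else 0) | a <- L] + sumn [seq (if P a then k a else 0) | a <- L]
  = count P L * n.
Proof.
elim: L => [|a L IH] //= /andP [Ha HL]; have := IH HL.
case: (P a) => /=; lia.
Qed.

Definition Ktab := [:: 12; 9; 10; 10; 8; 8; 8].

Lemma eoe_tab : all (fun i => let L := nth [::] C8_labels i in
  [&& count (fun a => ~~ par4 a) L == 4,
      sumn [seq (if ~~ par4 a then count (fun b => ham4 a b == 1) L else 0) | a <- L] == nth 0 Ktab i &
      all (fun a => count (fun b => ham4 a b == 1) L <= 4) L]) (iota 0 7) = true.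
Proof. vm_compute. reflexivity. Qed.

Lemma C8_eoe n (i : 'I_7) : 4 <= n -> even_out_edges (C8 n i) = C8_count n i.
Proof.
move=> Hn.
have [_ /andP [Hu _]] := andP (C8_qcycle i Hn).
rewrite eoe_sum //.
set L := nth [::] C8_labels i.
have -> : [seq (if ~~ parity x then n - count (adj x) (C8 n i) else 0) | x <- C8 n i] =
          [seq (if ~~ par4 a then n - count (fun b => ham4 a b == 1) L else 0) | a <- L].
  rewrite /C8 -/L -map_comp; apply/eq_in_map => a Ha /=.
  rewrite (parity_label Hn (C8_small_i Ha)) count_map.
  congr (if _ then n - _ else 0); apply: eq_in_count => b Hb /=.
  by rewrite -[adj _ _]/(ham _ _ == 1) (ham_label Hn (C8_small_i Ha) (C8_small_i Hb)).
move/allP: eoe_tab => /(_ i); rewrite mem_iota ltn_ord /= -/L => /(_ isT) /and3P [/eqP Hc /eqP HK Hk].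
have Hk' : all (fun a => count (fun b => ham4 a b == 1) L <= n) L.
  by apply/allP => a Ha; move/allP: Hk => /(_ a Ha) /leq_trans; apply.
have := sumn_add (fun a => ~~ par4 a) Hk'; rewrite Hc HK /C8_count.
move: (sumn _) => S; clear Hu Hc HK Hk Hk'; clearbody L; clear L.
case: i => [[|[|[|[|[|[|[|?]]]]]]] Hi] //= ; lia.
Qed.

Theorem mainTheorem9 (n : nat) (hn : 4 <= n) :
  (forall c : seq (vtx n), is_qcycle c -> size c = 8 ->
     exists! i : 'I_7, aut_maps_onto c (C8 n i)) /\
  (forall i j : 'I_7, i != j -> ~ aut_maps_onto (C8 n i) (C8 n j)) /\
  (forall i : 'I_7, is_qcycle (C8 n i) /\ even_out_edges (C8 n i) = C8_count n i).
Proof.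
split; [|split].
- case: n hn => [//|m] hn c Hc Hs.
  have [i Hi] := classify_cycle hn Hc Hs.
  exists i; split => // j Hj.
  by apply: (inv_C8_inj hn); rewrite -(inv_aut Hi) (inv_aut Hj).
- move=> i j Hij H; move/negP: Hij; apply.
  by apply/eqP; apply: (inv_C8_inj hn); exact: inv_aut H.
- by move=> i; split; [exact: C8_qcycle | exact: C8_eoe].
Qed.
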